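(* Let $\sigma\subset N_{\mathbb{Q}}$ be a pointed rational polyhedral cone, $n=\dim N_{\mathbb{Q}}$, and let $P=Q+\sigma^{\vee}$ with $Q\subset M_{\mathbb{Q}}$ a polytope whose vertices lie in $M$. Then for every integer $e\ge n-1$ the polyhedron $eP$ is normal. In particular, every integrally closed homogeneous ideal of an affine toric surface $\mathbf{k}[\sigma^{\vee}\cap M]$ (with $n=2$) is normal.
   Context: $N$ lattice of rank $n$, $M$ its dual; $\sigma^{\vee}=\{m\in M_{\mathbb{Q}}: m(v)\ge0\ \forall v\in\sigma\}$. $eP$ is the dilation of $P$ by $e$. A polyhedron $P'=Q'+\sigma^{\vee}$ with $Q'$ a lattice polytope is normal if for every integer $e\ge1$, $(eP')\cap M=\{m_1+\cdots+m_e:\ m_i\in P'\cap M\}$. An ideal is normal if all its positive powers are integrally closed; homogeneous ideals of $\mathbf{k}[\sigma^{\vee}\cap M]$ are nonzero ideals generated by monomials $\chi^m$. *)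

(* Defs.v *)
(* N = M = Z^n, N_Q = M_Q = Q^n realised as row vectors 'rV[rat]_n,
   with the pairing M x N -> Q the standard dot product. *)
From HB Require Import structures.
From mathcomp Require Import all_boot all_order all_algebra.
Set Implicit Arguments. Unset Strict Implicit. Unset Printing Implicit Defensive.
Import Order.TTheory GRing.Theory Num.Theory.
Local Open Scope ring_scope.

Definition pairing (n : nat) (m v : 'rV[rat]_n) : rat := \sum_(i < n) m 0 i * v 0 i.

Definition lattice_pt (n : nat) (v : 'rV[rat]_n) : Prop :=
  forall i : 'I_n, exists z : int, v 0 i = z%:~R.

Definition cone_gen (n : nat) (gens : seq 'rV[rat]_n) (v : 'rV[rat]_n) : Prop :=
  exists lam : 'I_(size gens) -> rat,
    (forall i, 0 <= lam i) /\ v = \sum_(i < size gens) lam i *: gens`_i.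

Definition pointed (n : nat) (sigma : 'rV[rat]_n -> Prop) : Prop :=
  forall v, sigma v -> sigma (- v) -> v = 0.

Definition dual_cone (n : nat) (sigma : 'rV[rat]_n -> Prop) (m : 'rV[rat]_n) : Prop :=
  forall v, sigma v -> 0 <= pairing m v.

Definition conv_hull (n : nat) (pts : seq 'rV[rat]_n) (x : 'rV[rat]_n) : Prop :=
  exists lam : 'I_(size pts) -> rat,
    [/\ forall i, 0 <= lam i, \sum_(i < size pts) lam i = 1 &
        x = \sum_(i < size pts) lam i *: pts`_i].

Definition minkowski (n : nat) (A B : 'rV[rat]_n -> Prop) (x : 'rV[rat]_n) : Prop :=
  exists a b, A a /\ B b /\ x = a + b.

Definition dilate (n : nat) (e : nat) (P : 'rV[rat]_n -> Prop) (x : 'rV[rat]_n) : Prop :=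
  exists p, P p /\ x = e%:R *: p.

Definition normal_polyhedron (n : nat) (P : 'rV[rat]_n -> Prop) : Prop :=
  forall k : nat, (1 <= k)%N -> forall m : 'rV[rat]_n,
    (dilate k P m /\ lattice_pt m) <->
    (exists f : 'I_k -> 'rV[rat]_n,
        (forall i, P (f i) /\ lattice_pt (f i)) /\ m = \sum_(i < k) f i).

(* Main.v *)
Require Import Defs.
From HB Require Import structures.
From mathcomp Require Import all_boot all_order all_algebra.
From mathcomp Require Import zify ring lra.
Import Order.TTheory GRing.Theory Num.Theory.
Local Open Scope ring_scope.

Section Helpers.
Local Set Implicit Arguments.
Local Unset Strict Implicit.
Local Unset Printing Implicit Defensive.


Lemma latE n (v : 'rV[rat]_n) : lattice_pt v <-> forall i, v 0 i \is a Num.int.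
Proof. by split=> H i; apply/intrP; apply: H. Qed.

Lemma lat0 n : lattice_pt (0 : 'rV[rat]_n).
Proof. by apply/latE => i; rewrite mxE. Qed.

Lemma latD n (u v : 'rV[rat]_n) : lattice_pt u -> lattice_pt v -> lattice_pt (u + v).
Proof. by move=> /latE Hu /latE Hv; apply/latE => i; rewrite mxE rpredD. Qed.

Lemma latN n (u : 'rV[rat]_n) : lattice_pt u -> lattice_pt (- u).
Proof. by move=> /latE Hu; apply/latE => i; rewrite mxE rpredN. Qed.

Lemma latB n (u v : 'rV[rat]_n) : lattice_pt u -> lattice_pt v -> lattice_pt (u - v).
Proof. by move=> Hu Hv; apply: latD => //; apply: latN. Qed.

Lemma latZ n (r : rat) (u : 'rV[rat]_n) : r \is a Num.int -> lattice_pt u -> lattice_pt (r *: u).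
Proof. by move=> Hr /latE Hu; apply/latE => i; rewrite mxE rpredM. Qed.

Lemma lat_sum n N (r : 'I_N -> rat) (w : 'I_N -> 'rV[rat]_n) :
  (forall i, r i \is a Num.int) -> (forall i, lattice_pt (w i)) ->
  lattice_pt (\sum_i r i *: w i).
Proof.
move=> Hr Hw; elim/big_ind: _ => //; first exact: lat0.
  exact: latD.
by move=> i _; apply: latZ.
Qed.

Lemma lat_sumf n N (w : 'I_N -> 'rV[rat]_n) :
  (forall i, lattice_pt (w i)) -> lattice_pt (\sum_i w i).
Proof.
move=> Hw; elim/big_ind: _ => //; [exact: lat0 | exact: latD].
Qed.

Lemma lat_denom n (v : 'rV[rat]_n) : exists D : nat, (0 < D)%N /\ lattice_pt (D%:R *: v).
Proof.
exists (\prod_(i < n) (absz (denq (v ord0 i))) : nat); split.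
  rewrite prodn_gt0 // => i; rewrite absz_gt0 denq_neq0 //.
apply/latE => i; rewrite mxE.
rewrite (bigD1 i) //= natrM mulrAC.
have -> : ((absz (denq (v 0 i)))%:R : rat) * v 0 i = (numq (v 0 i))%:~R.
  rewrite numqE mulrC; congr (_ * _).
  by rewrite -(@gez0_abs (denq (v 0 i))) ?ltW ?denq_gt0 //.
by rewrite rpredM // ?rpred_int ?rpred_nat.
Qed.


Definition RepF n (G : 'rV[rat]_n -> Prop) (t : rat) (x : 'rV[rat]_n) : Prop :=
  exists N (a : 'I_N -> rat) (w : 'I_N -> 'rV[rat]_n),
    [/\ forall i, 0 <= a i, forall i, G (w i), \sum_i a i = t & x = \sum_i a i *: w i].

Lemma rep_one n (G : 'rV[rat]_n -> Prop) w : G w -> RepF G 1 w.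
Proof.
move=> Gw; exists 1%N, (fun _ => 1), (fun _ => w); split => //.
  by rewrite big_ord1.
by rewrite big_ord1 scale1r.
Qed.

Lemma rep_scale n (G : 'rV[rat]_n -> Prop) t x r : 0 <= r -> RepF G t x -> RepF G (r * t) (r *: x).
Proof.
move=> r0 [N [a [w [a0 Gw sa ->]]]].
exists N, (fun i => r * a i), w; split => //.
- by move=> i; rewrite mulr_ge0.
- by rewrite -mulr_sumr sa.
- by rewrite scaler_sumr; apply: eq_bigr => i _; rewrite scalerA.
Qed.

Lemma rep_add n (G : 'rV[rat]_n -> Prop) t1 x1 t2 x2 :
  RepF G t1 x1 -> RepF G t2 x2 -> RepF G (t1 + t2) (x1 + x2).
Proof.
move=> [N1 [a1 [w1 [a10 G1 s1 ->]]]] [N2 [a2 [w2 [a20 G2 s2 ->]]]].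
exists (N1 + N2)%N.
exists (fun i => match split i with inl j => a1 j | inr j => a2 j end).
exists (fun i => match split i with inl j => w1 j | inr j => w2 j end).
split.
- by move=> i; case: (split i).
- by move=> i; case: (split i).
- rewrite big_split_ord /= -s1 -s2; congr (_ + _); apply: eq_bigr => i _.
    by rewrite (unsplitK (inl _ i) : split (lshift N2 i) = inl i).
  by rewrite (unsplitK (inr _ i) : split (rshift N1 i) = inr i).
- rewrite big_split_ord /=; congr (_ + _); apply: eq_bigr => i _.
    by rewrite (unsplitK (inl _ i) : split (lshift N2 i) = inl i).
  by rewrite (unsplitK (inr _ i) : split (rshift N1 i) = inr i).
Qed.

Lemma rep_mono n (G G' : 'rV[rat]_n -> Prop) t x :
  (forall w, G w -> G' w) -> RepF G t x -> RepF G' t x.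
Proof. by move=> H [N [a [w [a0 Gw s ->]]]]; exists N, a, w; split => // i; apply: H. Qed.

Lemma rep_sum n (G : 'rV[rat]_n -> Prop) t k (f : 'I_k -> 'rV[rat]_n) :
  (forall i, RepF G t (f i)) -> RepF G (k%:R * t) (\sum_i f i).
Proof.
elim: k f => [|k IH] f Hf.
  rewrite big_ord0 mul0r; exists 0%N, (fun _ => 0), (fun _ => 0).
  by split; try (by case); rewrite big_ord0.
rewrite big_ord_recr /= (_ : k.+1%:R = k%:R + 1) ?mulrDl ?mul1r; last by rewrite -natr1.
apply: rep_add; last exact: Hf.
by apply: IH.
Qed.

Lemma pairingD n (u v s : 'rV[rat]_n) : pairing (u + v) s = pairing u s + pairing v s.
Proof. by rewrite /pairing -big_split; apply: eq_bigr => i _; rewrite mxE mulrDl. Qed.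

Lemma pairingZ n r (u s : 'rV[rat]_n) : pairing (r *: u) s = r * pairing u s.
Proof. by rewrite /pairing mulr_sumr; apply: eq_bigr => i _; rewrite mxE mulrA. Qed.

Lemma pairing0 n (s : 'rV[rat]_n) : pairing 0 s = 0.
Proof. by rewrite /pairing big1 // => i _; rewrite mxE mul0r. Qed.

Lemma dual0 n S : @dual_cone n S 0.
Proof. by move=> v _; rewrite pairing0. Qed.

Lemma dualD n S u v : @dual_cone n S u -> dual_cone S v -> dual_cone S (u + v).
Proof. by move=> Hu Hv s Ss; rewrite pairingD addr_ge0 ?Hu ?Hv. Qed.

Lemma dualZ n S r u : 0 <= r -> @dual_cone n S u -> dual_cone S (r *: u).
Proof. by move=> r0 Hu s Ss; rewrite pairingZ mulr_ge0 ?Hu. Qed.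

Definition QC n (verts : seq 'rV[rat]_n) (t : rat) (q : 'rV[rat]_n) :=
  exists lam : 'I_(size verts) -> rat,
   [/\ forall i, 0 <= lam i, \sum_i lam i = t & q = \sum_i lam i *: verts`_i].

Lemma QC0 n (verts : seq 'rV[rat]_n) : QC verts 0 0.
Proof.
exists (fun _ => 0); split => //; first by rewrite big1.
by rewrite big1 // => i _; rewrite scale0r.
Qed.

Lemma QCD n (verts : seq 'rV[rat]_n) t1 t2 q1 q2 :
  QC verts t1 q1 -> QC verts t2 q2 -> QC verts (t1 + t2) (q1 + q2).
Proof.
move=> [l1 [l10 s1 ->]] [l2 [l20 s2 ->]]; exists (fun i => l1 i + l2 i); split.
- by move=> i; rewrite addr_ge0.
- by rewrite big_split /= s1 s2.
- by rewrite -big_split; apply: eq_bigr => i _; rewrite scalerDl.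
Qed.

Lemma QCZ n (verts : seq 'rV[rat]_n) t q r :
  0 <= r -> QC verts t q -> QC verts (r * t) (r *: q).
Proof.
move=> r0 [l [l0 s ->]]; exists (fun i => r * l i); split.
- by move=> i; rewrite mulr_ge0.
- by rewrite -mulr_sumr s.
- by rewrite scaler_sumr; apply: eq_bigr => i _; rewrite scalerA.
Qed.

Lemma QC_hull n (verts : seq 'rV[rat]_n) q : QC verts 1 q <-> conv_hull verts q.
Proof. by split => -[l [? ? ?]]; exists l; split. Qed.

Definition P0 n (verts : seq 'rV[rat]_n) (S : 'rV[rat]_n -> Prop) :=
  minkowski (conv_hull verts) (dual_cone S).

Lemma rep_P0_aux n (verts : seq 'rV[rat]_n) S N (a : 'I_N -> rat) (w : 'I_N -> 'rV[rat]_n) :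
  (forall i, 0 <= a i) -> (forall i, P0 verts S (w i)) ->
  exists q c, [/\ QC verts (\sum_i a i) q, dual_cone S c & \sum_i a i *: w i = q + c].
Proof.
elim: N a w => [|N IH] a w a0 Pw.
  exists 0, 0; rewrite !big_ord0 addr0; split => //; [exact: QC0 | exact: dual0].
have [q [c [Hq Hc E]]] := IH (fun i => a (widen_ord (leqnSn N) i)) (fun i => w (widen_ord (leqnSn N) i)) (fun i => a0 _) (fun i => Pw _).
have [q1 [c1 [Hq1 [Hc1 Ew]]]] := Pw ord_max.
exists (q + a ord_max *: q1), (c + a ord_max *: c1); split.
- rewrite big_ord_recr /=; apply: QCD => //.
  by rewrite -[X in QC _ X _]mulr1; apply: QCZ => //; apply/QC_hull.
- by apply: dualD => //; apply: dualZ.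
- by rewrite big_ord_recr /= E Ew scalerDr; rewrite addrACA.
Qed.

Lemma rep_P0 n (verts : seq 'rV[rat]_n) S t x :
  RepF (P0 verts S) t x -> exists q c, [/\ QC verts t q, dual_cone S c & x = q + c].
Proof.
move=> [N [a [w [a0 Pw <- ->]]]]; exact: rep_P0_aux.
Qed.


Definition Bk n N (w : 'I_N -> 'rV[rat]_n) : 'M[rat]_(N, 1 + n) :=
  \matrix_(i < N) row_mx (1 : 'M[rat]_1) (w i).

Lemma row_mx_sum (I : Type) (r : seq I) (P : pred I) m n1 n2 (A : I -> 'M[rat]_(m, n1)) (B : I -> 'M[rat]_(m, n2)) :
  \sum_(i <- r | P i) row_mx (A i) (B i) = row_mx (\sum_(i <- r | P i) A i) (\sum_(i <- r | P i) B i).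
Proof.
elim/big_rec3: _ => [|i y1 y2 y3 _ ->]; first by rewrite row_mx0.
by rewrite add_row_mx.
Qed.

Lemma vBk n N (w : 'I_N -> 'rV[rat]_n) (v : 'rV[rat]_N) :
  v *m Bk w = row_mx (\sum_i v 0 i *: (1 : 'M[rat]_1)) (\sum_i v 0 i *: w i).
Proof.
rewrite mulmx_sum_row -row_mx_sum; apply: eq_bigr => i _ /=.
by rewrite /Bk rowK scale_row_mx.
Qed.

Lemma dep_of_vec n N (w : 'I_N -> 'rV[rat]_n) (v : 'rV[rat]_N) :
  v != 0 -> v *m Bk w = 0 ->
  [/\ exists i, v 0 i != 0, \sum_i v 0 i = 0 & \sum_i v 0 i *: w i = 0].
Proof.
move=> v0; rewrite vBk -row_mx0 => /eq_row_mx [H1 H2]; split => //.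
- apply/existsP; apply: contraNT v0; rewrite negb_exists => /forallP H.
  by apply/eqP/matrixP => i j; rewrite [i]ord1 mxE; apply/eqP; have := H j; rewrite negbK.
- move/matrixP: H1 => /(_ 0 0); rewrite summxE mxE => H.
  rewrite -[X in _ = X]H.
  by apply: eq_bigr => i _; rewrite !mxE mulr1.
Qed.

Lemma dep_exists n N (w : 'I_N -> 'rV[rat]_n) : (n.+1 < N)%N ->
  exists v : 'rV[rat]_N, v != 0 /\ v *m Bk w = 0.
Proof.
move=> hN.
have : kermx (Bk w) != 0.
  rewrite kermx_eq0 /row_free; apply/negP => /eqP Hr.
  have := rank_leq_col (Bk w); rewrite Hr; lia.
move=> K0.
have [i Hi] : exists i, row i (kermx (Bk w)) != 0.
  apply/existsP; apply: contraNT K0; rewrite negb_exists => /forallP H.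
  apply/eqP/row_matrixP => i; rewrite row0; apply/eqP; have := H i; rewrite negbK.
  by [].
exists (row i (kermx (Bk w))); split => //.
by rewrite -row_mul mulmx_ker row0.
Qed.

Lemma det_replace m (B B' : 'M[rat]_m) j (g : 'I_m -> rat) :
  (forall i, i != j -> row i B' = row i B) ->
  row j B' = \sum_i g i *: row i B -> \det B' = g j * \det B.
Proof.
move=> Ho Hj.
have Hc : forall k, cofactor B' j k = cofactor B j k.
  move=> k; rewrite /cofactor; congr (_ * _); congr (\det _).
  apply/matrixP => a b; rewrite !mxE.
  have Hn : lift j a != j by rewrite eq_sym neq_lift.
  have := Ho _ Hn => /rowP /(_ (lift k b)).
  by rewrite !mxE.
rewrite (expand_det_row B' j).
have HB : forall k, B' j k = \sum_i g i * B i k.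
  move=> k; have /rowP /(_ k) := Hj; rewrite mxE => ->.
  by rewrite summxE; apply: eq_bigr => i _; rewrite !mxE.
under eq_bigr do rewrite HB Hc mulr_suml.
rewrite exchange_big /=.
under eq_bigr => i _.
  rewrite (_ : \sum_k g i * B i k * cofactor B j k = g i * (B *m \adj B) i j); last first.
    by rewrite mxE mulr_sumr; apply: eq_bigr => k _; rewrite [(\adj _) _ _]mxE mulrA.
  rewrite mul_mx_adj mxE; over.
rewrite (bigD1 j) //= eqxx mulr1n big1 ?addr0 // => i /negbTE ->.
by rewrite mulr0n mulr0.
Qed.

Lemma det_int m (A : 'M[rat]_m) : (forall i j, A i j \is a Num.int) -> \det A \is a Num.int.
Proof.
move=> H; rewrite /determinant; apply: rpred_sum => s _.
apply: rpredM; first by rewrite rpredX ?rpredN ?rpred1.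
by apply: rpred_prod => i _.
Qed.

Lemma Bk_int n N (w : 'I_N -> 'rV[rat]_n) : (forall i, lattice_pt (w i)) ->
  forall i k, Bk w i k \is a Num.int.
Proof.
move=> H i k; rewrite /Bk mxE.
rewrite mxE; case: (split k) => j.
  by rewrite mxE ?rpred_nat.
exact/(proj1 (latE _) (H i)).
Qed.


Lemma select N (a mu : 'I_N -> rat) i0 : (forall i, 0 <= a i) -> 0 < mu i0 ->
  exists j, 0 < mu j /\ forall i, 0 <= a i - a j / mu j * mu i.
Proof.
move=> a0 mu0.
case: (@real_arg_minP _ _ i0 (fun i => 0 < mu i) (fun i => a i / mu i)) => //.
  by move=> i _; rewrite num_real.
move=> j Pj Hmin; exists j; split => // i; rewrite subr_ge0.
case: (ltrP 0 (mu i)) => Hi.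
  by rewrite -ler_pdivlMr //; apply: Hmin.
apply: le_trans (a0 i); apply: mulr_ge0_le0 => //.
by rewrite divr_ge0 // ltW.
Qed.

Lemma zero_out n N (a mu : 'I_N -> rat) (w : 'I_N -> 'rV[rat]_n) :
  (forall i, 0 <= a i) -> (exists i, mu i != 0) -> \sum_i mu i = 0 ->
  \sum_i mu i *: w i = 0 ->
  exists a' j, [/\ forall i, 0 <= a' i, a' j = 0, \sum_i a' i = \sum_i a i
     & \sum_i a' i *: w i = \sum_i a i *: w i].
Proof.
move=> a0 [i1 Hi1] smu smw.
have [i0 Hi0] : exists i, 0 < mu i.
  case: (boolP [exists i, 0 < mu i]) => [/existsP //|/existsPn H].
  have Hz : forall i, - mu i = 0.
    move=> i; apply: (@psumr_eq0P _ _ predT (fun i => - mu i)) => //.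
      by move=> k _; rewrite oppr_ge0 leNgt H.
    by rewrite sumrN smu oppr0.
  by move: Hi1; rewrite -oppr_eq0 Hz eqxx.
have [j [Hj Ha]] := select a0 Hi0.
exists (fun i => a i - a j / mu j * mu i), j; split => //.
- by rewrite divfK ?subrr // gt_eqF.
- by rewrite sumrB -mulr_sumr smu mulr0 subr0.
- rewrite (eq_bigr (fun i => a i *: w i - (a j / mu j) *: (mu i *: w i))).
    by rewrite sumrB -scaler_sumr smw scaler0 subr0.
  by move=> i _; rewrite scalerBl scalerA.
Qed.

Lemma cara_aux n (G : 'rV[rat]_n -> Prop) N :
  forall (a : 'I_N -> rat) (w : 'I_N -> 'rV[rat]_n), (0 < N)%N ->
  (forall i, 0 <= a i) -> (forall i, G (w i)) ->
  exists (a' : 'I_n.+1 -> rat) (w' : 'I_n.+1 -> 'rV[rat]_n),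
   [/\ forall i, 0 <= a' i, forall i, G (w' i), \sum_i a' i = \sum_i a i
     & \sum_i a' i *: w' i = \sum_i a i *: w i].
Proof.
elim: N => [|N IH] a w // _ a0 Gw.
case: (leqP N.+1 n.+1) => hN.
  exists (fun i : 'I_n.+1 => if (i < N.+1)%N then a (insubd ord0 (val i)) else 0).
  exists (fun i : 'I_n.+1 => w (insubd ord0 (val i))).
  split.
  - by move=> i; case: ifP.
  - by [].
  - rewrite -big_mkcond /= -(big_ord_widen _ (fun k => a (insubd ord0 k))) //.
    by apply: eq_bigr => i _; rewrite valKd.
  - rewrite (eq_bigr (fun i : 'I_n.+1 => if (i < N.+1)%N then a (insubd ord0 (val i)) *: w (insubd ord0 (val i)) else 0)); last first.
      by move=> i _; case: ifP; rewrite ?scale0r.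
    rewrite -big_mkcond /= -(big_ord_widen _ (fun k => a (insubd ord0 k) *: w (insubd ord0 k))) //.
    by apply: eq_bigr => i _; rewrite valKd.
have [v [v0 vB]] := dep_exists w hN.
have [[i1 Hi1] smu smw] := dep_of_vec v0 vB.
have [a' [j [a'0 a'j sa' sw']]] := @zero_out n N.+1 a (fun i => v 0 i) w a0 (ex_intro _ i1 Hi1) smu smw.
have [|||b [u [b0 Gu sb su]]] := IH (fun i => a' (lift j i)) (fun i => w (lift j i)).
- by move: hN; case: N {IH a w a0 Gw v v0 vB i1 Hi1 smu smw a' a'0 a'j sa' sw' j}.
- by move=> i; apply: a'0.
- by move=> i; apply: Gw.
exists b, u; split => //.
  by rewrite sb -sa' (bigD1_ord j) //= a'j add0r.
by rewrite su -sw' (bigD1_ord j) //= a'j scale0r add0r.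
Qed.

Lemma cara n (G : 'rV[rat]_n -> Prop) t x : RepF G t x -> 0 < t ->
  exists (a : 'I_n.+1 -> rat) (w : 'I_n.+1 -> 'rV[rat]_n),
   [/\ forall i, 0 <= a i, forall i, G (w i), \sum_i a i = t & x = \sum_i a i *: w i].
Proof.
move=> [N [a [w [a0 Gw <- ->]]]] t0.
have hN : (0 < N)%N by case: N a w a0 Gw t0 => // a w _ _; rewrite big_ord0 ltxx.
have [a' [w' [? ? ? ?]]] := cara_aux hN a0 Gw.
by exists a', w'; split.
Qed.


Definition fl (r : rat) : nat := absz (Num.floor r).
Definition fr (r : rat) : rat := r - (fl r)%:R.

Lemma flE r : 0 <= r -> (fl r)%:R = (Num.floor r)%:~R :> rat.
Proof.
by move=> r0; rewrite /fl -[in RHS](@gez0_abs (Num.floor r)) ?floor_ge0 //.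
Qed.

Lemma fr_ge0 r : 0 <= r -> 0 <= fr r.
Proof. by move=> r0; rewrite /fr flE // subr_ge0 floor_le. Qed.

Lemma fr_lt1 r : 0 <= r -> fr r < 1.
Proof.
move=> r0; rewrite /fr flE // ltrBlDl.
by have := floorD1_gt r; rewrite intrD addrC.
Qed.

Lemma frE r : r = (fl r)%:R + fr r.
Proof. by rewrite /fr addrC subrK. Qed.

Lemma fl0 : fl 0 = 0%N.
Proof. by rewrite /fl floor0. Qed.

Lemma fr0 : fr 0 = 0.
Proof. by rewrite /fr fl0 subrr. Qed.

Lemma fr_int r : 0 <= r -> r \is a Num.int -> fr r = 0.
Proof.
move=> r0 /intrP [z E]; rewrite /fr flE // E.
rewrite intrKfloor subrr //.
Qed.

Lemma sumfr N (a : 'I_N -> rat) (K : nat) : (forall i, 0 <= a i) -> \sum_i a i = K%:R ->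
  (\sum_i fl (a i) <= K)%N /\ \sum_i fr (a i) = (K - \sum_i fl (a i))%:R.
Proof.
move=> a0 sa.
have E : \sum_i a i = (\sum_i fl (a i))%:R + \sum_i fr (a i).
  by rewrite natr_sum -big_split /=; apply: eq_bigr => i _; rewrite -frE.
have H : (\sum_i fl (a i) <= K)%N.
  rewrite -(ler_nat rat) -sa E lerDl; apply: sumr_ge0 => i _; exact: fr_ge0.
split => //; rewrite natrB // -sa E; ring.
Qed.

Lemma sumlt M (f : 'I_M.+1 -> rat) : (forall i, f i < 1) -> \sum_i f i < M.+1%:R.
Proof.
elim: M f => [|M IH] f Hf; first by rewrite big_ord1.
rewrite big_ord_recr /= (_ : M.+2%:R = M.+1%:R + 1); last by rewrite -natr1.
by apply: ltrD => //; apply: IH.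
Qed.

Lemma bound_all n (f : 'I_n.+1 -> rat) S : (forall i, f i < 1) -> \sum_i f i = S%:R -> (S <= n)%N.
Proof. by move=> Hf Hs; have := sumlt Hf; rewrite Hs ltr_nat. Qed.

Lemma bound_zero n (f : 'I_n.+1 -> rat) j S : (forall i, f i < 1) -> f j = 0 ->
  \sum_i f i = S%:R -> (S <= n.-1)%N.
Proof.
move=> Hf fj; rewrite (bigD1_ord j) //= fj add0r.
case: n f j Hf fj => [|n] f j Hf fj.
  by rewrite big_ord0 => /esym/eqP; rewrite pnatr_eq0 => /eqP ->.
by move=> Hs; have := sumlt (fun i => Hf (lift j i)); rewrite Hs ltr_nat.
Qed.

Lemma split_nat N (u : 'I_N -> nat) T : (T <= \sum_i u i)%N ->
  exists v : 'I_N -> nat, (forall i, v i <= u i)%N /\ (\sum_i v i)%N = T.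
Proof.
elim: N u T => [|N IH] u T.
  by rewrite big_ord0 leqn0 => /eqP ->; exists (fun _ => 0%N); split => //; rewrite big_ord0.
rewrite big_ord_recl => HT.
have H1 : (T - minn T (u ord0) <= \sum_(i < N) u (lift ord0 i))%N by lia.
have [v [Hv Sv]] := IH (fun i => u (lift ord0 i)) (T - minn T (u ord0))%N H1.
exists (fun i => match unlift ord0 i with Some i' => v i' | None => minn T (u ord0) end).
split.
  move=> i; case: (unliftP ord0 i) => [i' ->|->]; first exact: Hv.
  exact: geq_minr.
rewrite big_ord_recl unlift_none.
rewrite (eq_bigr (fun i => v i)); last by move=> i _; rewrite liftK.
rewrite Sv; lia.
Qed.


Lemma easy n (G : 'rV[rat]_n -> Prop) (HG : forall w, G w -> lattice_pt w) N
  (a : 'I_N -> rat) (w : 'I_N -> 'rV[rat]_n) x (c k : nat) :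
  (forall i, 0 <= a i) -> (forall i, G (w i)) -> \sum_i a i = (c + k * c)%N%:R ->
  x = \sum_i a i *: w i -> lattice_pt x ->
  (c + k * c <= \sum_i fl (a i) + c)%N ->
  exists y, [/\ lattice_pt y, RepF G c%:R y & RepF G (k * c)%N%:R (x - y)].
Proof.
move=> a0 Gw sa Ex Lx HK.
have [HU Sfr] := sumfr a0 sa.
move: HU Sfr HK; set U := (\sum_i fl (a i))%N; set P := (k * c)%N => HU Sfr HK.
have HT : ((c - (c + P - U)) <= \sum_i fl (a i))%N by rewrite -/U; lia.
have [v [Hv Sv]] := split_nat HT.
set y := \sum_i (fr (a i) + (v i)%:R) *: w i.
set d := \sum_i ((fl (a i) - v i)%N%:R) *: w i.
have Exy : x - y = d.
  rewrite Ex /y /d -sumrB; apply: eq_bigr => i _; rewrite -scalerBl; congr (_ *: _).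
  rewrite natrB // /fr; ring.
have Ld : lattice_pt d.
  by apply: lat_sum => i; [rewrite rpred_nat | apply: HG].
exists y; split.
- have -> : y = x - d by rewrite -Exy opprB addrC subrK.
  exact: latB.
- exists N, (fun i => fr (a i) + (v i)%:R), w; split => //.
  + by move=> i; rewrite addr_ge0 ?fr_ge0.
  + rewrite big_split /= Sfr -natr_sum Sv -natrD; congr (_%:R); lia.
- rewrite Exy; exists N, (fun i => (fl (a i) - v i)%N%:R), w; split => //.
  rewrite (eq_bigr (fun i => (fl (a i))%:R - (v i)%:R)); last by move=> i _; rewrite natrB.
  rewrite sumrB -!natr_sum Sv -/U -natrB; last lia.
  congr (_%:R); lia.
Qed.


Definition meas n (w : 'I_n.+1 -> 'rV[rat]_n) : nat := absz (Num.floor (\det (Bk w))).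

Lemma meas_lt (d d' g : rat) : d \is a Num.int -> d' \is a Num.int -> d != 0 ->
  d' = g * d -> 0 < g -> g < 1 -> (absz (Num.floor d') < absz (Num.floor d))%N.
Proof.
move=> Hd Hd' d0 E g0 g1.
have H : `|d'| < `|d| by rewrite E normrM (gtr0_norm g0) gtr_pMl // normr_gt0.
rewrite -(floorK Hd) -(floorK Hd') -!intr_norm ltr_int in H.
by rewrite -ltz_nat !abszE.
Qed.

Lemma step n (G : 'rV[rat]_n -> Prop) (HG : forall w, G w -> lattice_pt w)
  (H2 : forall z, lattice_pt z -> RepF G 1 z -> G z) (c k : nat) (hc : (n - 1 <= c)%N)
  (a : 'I_n.+1 -> rat) (w : 'I_n.+1 -> 'rV[rat]_n) x :
  (forall i, 0 <= a i) -> (forall i, G (w i)) -> \sum_i a i = (c + k * c)%N%:R ->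
  x = \sum_i a i *: w i -> lattice_pt x ->
  (exists y, [/\ lattice_pt y, RepF G c%:R y & RepF G (k * c)%N%:R (x - y)]) \/
  (exists (a' : 'I_n.+1 -> rat) (w' : 'I_n.+1 -> 'rV[rat]_n),
     [/\ forall i, 0 <= a' i, forall i, G (w' i), \sum_i a' i = (c + k * c)%N%:R,
         x = \sum_i a' i *: w' i & (meas w' < meas w)%N]).
Proof.
move=> a0 Gw sa Ex Lx.
have [HU Sfr] := sumfr a0 sa.
case: (leqP (c + k * c) (\sum_i fl (a i) + c)) => HK.
  by left; apply: (easy HG a0 Gw sa Ex Lx HK).
have Lw : forall i, lattice_pt (w i) by move=> i; apply: HG.
case: (boolP (\det (Bk w) == 0)) => Hd.
  left; move/det0P: Hd => [v v0 vB].
  have [[i1 Hi1] smu smw] := dep_of_vec v0 vB.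
  have [a' [j [a'0 a'j sa' sw']]] := @zero_out n n.+1 a (fun i => v 0 i) w a0 (ex_intro _ i1 Hi1) smu smw.
  rewrite sa in sa'.
  apply: (easy HG a'0 Gw sa') => //; first by rewrite sw'.
  have [HU' Sfr'] := sumfr a'0 sa'.
  have := bound_zero (fun i => fr_lt1 (a'0 i)) (_ : fr (a' j) = 0) Sfr'.
  rewrite a'j fr0 => /(_ erefl) H; lia.
have HS := bound_all (fun i => fr_lt1 (a0 i)) Sfr.
have frpos : forall i, 0 < fr (a i).
  move=> i; rewrite lt_def fr_ge0 // andbT; apply/negP => /eqP fi.
  have := bound_zero (fun i => fr_lt1 (a0 i)) fi Sfr; lia.
right.
set g := fun i => 1 - fr (a i).
have g0 : forall i, 0 < g i by move=> i; rewrite /g subr_gt0 fr_lt1.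
have g1 : forall i, g i < 1 by move=> i; rewrite /g ltrBlDr ltrDl.
have sg : \sum_i g i = 1.
  rewrite /g sumrB Sfr sumr_const card_ord -[1 *+ n.+1]/(n.+1%:R) -natrB; last lia.
  by have -> : (n.+1 - (c + k * c - \sum_i fl (a i)))%N = 1%N by lia.
set z := \sum_i g i *: w i.
have Lz : lattice_pt z.
  have -> : z = \sum_i (1 + (fl (a i))%:R) *: w i - x.
    rewrite Ex -sumrB; apply: eq_bigr => i _; rewrite -scalerBl; congr (_ *: _).
    by rewrite /g /fr; ring.
  apply: latB => //; apply: lat_sum => // i; rewrite rpredD ?rpred_nat //.
have Gz : G z by apply: H2 => //; exists n.+1, g, w; split => // i; apply: ltW.
have [j [gj Ha]] := select a0 (g0 ord0).
set t := a j / g j.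
have t0 : 0 <= t by rewrite divr_ge0 // ltW.
have tj : a j - t * g j = 0 by rewrite /t divfK ?subrr // gt_eqF.
exists (fun i => a i - t * g i + (i == j)%:R * t).
exists (fun i => if i == j then z else w i).
split.
- by move=> i; rewrite addr_ge0 // mulr_ge0.
- by move=> i; case: ifP.
- rewrite big_split /= sumrB -mulr_sumr sg mulr1 -sa.
  rewrite [X in _ + X](bigD1 j) //= eqxx mul1r.
  rewrite [X in _ + (_ + X)]big1 ?addr0 ?subrK // => i /negbTE ->.
  by rewrite mul0r.
- rewrite (eq_bigr (fun i => (a i - t * g i) *: w i + (i == j)%:R *: (t *: z))); last first.
    move=> i _; rewrite scalerDl; case: (eqVneq i j) => [->|Hij].
      by rewrite tj !scale0r mul1r scale1r.
    by rewrite mul0r !scale0r.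
  rewrite big_split /= [X in _ + X](bigD1 j) //= eqxx scale1r.
  rewrite [X in _ + (_ + X)]big1 ?addr0; last first.
    by move=> i /negbTE ->; rewrite scale0r.
  rewrite (eq_bigr (fun i => a i *: w i - t *: (g i *: w i))); last first.
    by move=> i _; rewrite scalerBl scalerA.
  by rewrite sumrB -scaler_sumr -Ex subrK.
- rewrite /meas.
  have Hdet : \det (Bk (fun i => if i == j then z else w i)) = g j * \det (Bk w).
    apply: det_replace.
      by move=> i /negbTE Hi; rewrite /Bk !rowK Hi.
    rewrite /Bk rowK eqxx.
    rewrite (eq_bigr (fun i => row_mx (g i *: (1 : 'M[rat]_1)) (g i *: w i))); last first.
      move=> i _; rewrite rowK; apply/rowP => q; rewrite !mxE.
      by case: (split q) => q'; rewrite !mxE.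
    by rewrite row_mx_sum -scaler_suml sg scale1r.
  apply: (meas_lt _ _ Hd Hdet (gj) (g1 j)).
    by apply: det_int; apply: Bk_int.
  apply: det_int; apply: Bk_int => i; case: ifP => _ //.
Qed.


Lemma core n (G : 'rV[rat]_n -> Prop) (HG : forall w, G w -> lattice_pt w)
  (H2 : forall z, lattice_pt z -> RepF G 1 z -> G z) (c k : nat) (hc : (n - 1 <= c)%N) m :
  forall (a : 'I_n.+1 -> rat) (w : 'I_n.+1 -> 'rV[rat]_n) x, (meas w <= m)%N ->
  (forall i, 0 <= a i) -> (forall i, G (w i)) -> \sum_i a i = (c + k * c)%N%:R ->
  x = \sum_i a i *: w i -> lattice_pt x ->
  exists y, [/\ lattice_pt y, RepF G c%:R y & RepF G (k * c)%N%:R (x - y)].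
Proof.
elim: m => [|m IH] a w x Hm a0 Gw sa Ex Lx;
  (case: (step HG H2 hc a0 Gw sa Ex Lx) => [//|[a' [w' [a'0 Gw' sa' Ex' Hlt]]]]).
  by move: Hm Hlt; rewrite leqn0 => /eqP ->.
by apply: (IH a' w' x) => //; lia.
Qed.

Lemma peel n (G : 'rV[rat]_n -> Prop) (HG : forall w, G w -> lattice_pt w)
  (H2 : forall z, lattice_pt z -> RepF G 1 z -> G z) (c k : nat) (hc : (n - 1 <= c)%N)
  (c0 : (0 < c)%N) x :
  RepF G (c + k * c)%N%:R x -> lattice_pt x ->
  exists y, [/\ lattice_pt y, RepF G c%:R y & RepF G (k * c)%N%:R (x - y)].
Proof.
move=> Hx Lx.
have [|a [w [a0 Gw sa Ex]]] := cara Hx; first by rewrite ltr0n; lia.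
exact: (core HG H2 hc (leqnn _) a0 Gw sa Ex Lx).
Qed.

Lemma norm_core n (G : 'rV[rat]_n -> Prop) (HG : forall w, G w -> lattice_pt w)
  (H2 : forall z, lattice_pt z -> RepF G 1 z -> G z) (c : nat) (hc : (n - 1 <= c)%N)
  (c0 : (0 < c)%N) k : forall x,
  RepF G (k.+1 * c)%N%:R x -> lattice_pt x ->
  exists f : 'I_k.+1 -> 'rV[rat]_n, (forall i, RepF G c%:R (f i) /\ lattice_pt (f i)) /\ x = \sum_i f i.
Proof.
elim: k => [|k IH] x Hx Lx.
  exists (fun _ => x); split; last by rewrite big_ord1.
  by move=> i; split => //; rewrite mul1n in Hx.
rewrite mulSn in Hx.
have [y [Ly Ry Rxy]] := peel HG H2 hc c0 Hx Lx.
have [f [Hf Ef]] := IH (x - y) Rxy (latB Lx Ly).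
exists (fun i => match unlift ord_max i with Some i' => f i' | None => y end); split.
  by move=> i; case: (unliftP ord_max i) => [i' _|_]; [apply: Hf | split].
rewrite (bigD1_ord ord_max) //= unlift_none.
rewrite (eq_bigr (fun i => f i)); last by move=> i _; rewrite liftK.
by rewrite -Ef addrC subrK.
Qed.


Lemma vert_hull n (verts : seq 'rV[rat]_n) (i : 'I_(size verts)) : conv_hull verts verts`_i.
Proof.
exists (fun j => (j == i)%:R); split.
- by move=> j; rewrite ler0n.
- by rewrite (bigD1 i) //= eqxx big1 ?addr0 // => j /negbTE ->.
- rewrite (bigD1 i) //= eqxx scale1r big1 ?addr0 // => j /negbTE ->.
  by rewrite scale0r.
Qed.


End Helpers.

Theorem theorem3p6 (n : nat) (gens : seq 'rV[rat]_n) (verts : seq 'rV[rat]_n) :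
  pointed (cone_gen gens) ->
  (forall v, v \in verts -> lattice_pt v) ->
  forall e : nat, (n - 1 <= e)%N ->
    normal_polyhedron
      (dilate e (minkowski (conv_hull verts) (dual_cone (cone_gen gens)))).
Proof.
move=> _ Hv e he k hk m.
set S := cone_gen gens.
set P := minkowski (conv_hull verts) (dual_cone S).
have HPP : P = P0 verts S by [].
set G := fun w => lattice_pt w /\ P w.
have HG : forall w, G w -> lattice_pt w by move=> w [].
have H2 : forall z, lattice_pt z -> RepF G 1 z -> G z.
  move=> z Lz Rz; split => //.
  have /rep_P0 [q [cc [Hq Hc ->]]] := rep_mono (fun w (H : G w) => proj2 H) Rz.
  by exists q, cc; split => //; apply/QC_hull.
have Lv : forall i : 'I_(size verts), lattice_pt verts`_i.
  by move=> i; apply: Hv; rewrite mem_nth.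
case: e he => [|e] he.
  split.
    move=> [[p [[p' [Pp' ->]] ->]] _].
    exists (fun _ => 0); split; last by rewrite scale0r scaler0 big1.
    by move=> i; split; [exists p'; rewrite scale0r | exact: lat0].
  move=> [f [Hf ->]].
  have Hf0 : forall i, f i = 0 by move=> i; have [[p [_ ->]] _] := Hf i; rewrite scale0r.
  rewrite big1; last by move=> i _; apply: Hf0.
  split; last exact: lat0.
  case: k hk f Hf Hf0 => // k _ f Hf _.
  have [[p' [Pp' _]] _] := Hf ord0.
  by exists 0; split; [exists p'; rewrite scale0r | rewrite scaler0].
have Rgen : forall t x, RepF G t x -> 0 < t -> dilate e.+1 P ((e.+1)%:R / t *: x).
  move=> t x Rx t0.
  have /rep_P0 [q [cc [Hq Hc Ex]]] := rep_mono (fun w (H : G w) => proj2 H) Rx.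
  exists (t^-1 *: x); split; last by rewrite scalerA.
  exists (t^-1 *: q), (t^-1 *: cc); split; [|split].
  - apply/QC_hull; have := QCZ (_ : 0 <= t^-1) Hq; rewrite mulVf ?lt0r_neq0 //.
    by apply; rewrite invr_ge0 ltW.
  - by apply: dualZ => //; rewrite invr_ge0 ltW.
  - by rewrite Ex scalerDr.
have e0 : (0 < (e.+1)%:R :> rat) by rewrite ltr0n.
split.
  move=> [[p [[p' [Pp' ->]] ->]] Lm].
  have [q [cc [Hq [Hc Ep]]]] := Pp'.
  rewrite Ep in Lm *.
  have [D [D0 LD]] := lat_denom cc.
  have [lam [l0 sl Eq]] := Hq.
  have Gv : forall i : 'I_(size verts), G verts`_i.
    by move=> i; split => //; exists verts`_i, 0; split; [exact: vert_hull | split; [exact: dual0 | rewrite addr0]].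
  have R1 : RepF G 1 q by exists (size verts), lam, (fun i => verts`_i); split.
  have R2 : RepF G 1 (q + D%:R *: cc).
    exists (size verts), lam, (fun i => verts`_i + D%:R *: cc); split => //.
      move=> i; split; first by apply: latD.
      exists verts`_i, (D%:R *: cc); split; first exact: vert_hull.
      by split => //; apply: dualZ.
    rewrite (eq_bigr (fun i => lam i *: verts`_i + lam i *: (D%:R *: cc))); last by move=> i _; rewrite scalerDr.
    by rewrite big_split /= -scaler_suml sl scale1r Eq.
  have D0' : (0 < D%:R :> rat) by rewrite ltr0n.
  have R3 : RepF G 1 (q + cc).
    have := rep_add (rep_scale (_ : 0 <= 1 - D%:R^-1) R1) (rep_scale (_ : 0 <= D%:R^-1) R2).
    rewrite !mulr1 subrK scalerDr scalerA mulVf ?lt0r_neq0 // scale1r addrA -scalerDl subrK scale1r.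
    by apply; [rewrite subr_ge0 invf_le1 // ler1n | rewrite invr_ge0 ltW].
  case: k hk Lm => // k _ Lm.
  have R4 := rep_scale (_ : 0 <= (k.+1 * e.+1)%N%:R) R3.
  rewrite mulr1 in R4.
  have Lm' : lattice_pt ((k.+1 * e.+1)%N%:R *: (q + cc)).
    by move: Lm; rewrite !scalerA -natrM.
  have [f [Hf Ef]] := norm_core HG H2 he (ltn0Sn e) (R4 (ler0n _ _)) Lm'.
  exists f; split; last by rewrite !scalerA -natrM Ef.
  move=> i; have [Rf Lf] := Hf i; split => //.
  by have := Rgen _ _ Rf e0; rewrite divff ?lt0r_neq0 // scale1r.
move=> [f [Hf ->]].
have Rf : forall i, RepF P e.+1%:R (f i).
  move=> i; have [[p [Pp ->]] Lf] := Hf i.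
  rewrite -[X in RepF _ X _]mulr1; apply: rep_scale; first exact: ler0n.
  exact: rep_one.
have Rs := rep_sum Rf.
split; last by apply: lat_sumf => i; case: (Hf i).
have kpos : (0 < k%:R * e.+1%:R :> rat) by rewrite mulr_gt0 // ltr0n.
have /rep_P0 [q [cc [Hq Hc Ex]]] := Rs.
exists (e.+1%:R *: ((k%:R * e.+1%:R)^-1 *: (\sum_i f i))); split.
  exists ((k%:R * e.+1%:R)^-1 *: (\sum_i f i)); split => //.
  exists ((k%:R * e.+1%:R)^-1 *: q), ((k%:R * e.+1%:R)^-1 *: cc); split; [|split].
  - apply/QC_hull; have := QCZ (_ : 0 <= (k%:R * e.+1%:R)^-1) Hq; rewrite mulVf ?lt0r_neq0 //.
    by apply; rewrite invr_ge0 ltW.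
  - by apply: dualZ => //; rewrite invr_ge0 ltW.
  - by rewrite Ex scalerDr.
by rewrite !scalerA mulrA mulfV ?lt0r_neq0 // scale1r.
Qed.
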